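(* Let $G$ be a complete $k$-partite graph ($k\ge 3$) on $n$ vertices with parts $V_1,\dots,V_k$, and let $w_0$ be any initial weighting. Then $S_{w_0}(i)=0$ for all but exactly one index $i$, and $$\mathcal{RC}(G,w_0)=n+S_{w_0}-1,\qquad\text{where } S_{w_0}=\sum_{i=1}^k S_{w_0}(i)=\max_{1\le i\le k}S_{w_0}(i).$$
   Context: Robot crawler model: let $G=(V,E)$ be a finite connected simple graph with $|V|=n$. An initial weighting is a bijection $w_0:V\to\{-n,-n+1,\dots,-1\}$. At time $1$ the crawler visits $w_0^{-1}(-n)$. If the crawler visits vertex $v$ at time $t$, then $w_t(v)=t$ and $w_t(u)=w_{t-1}(u)$ for all $u\neq v$. If $\min_{y\in V}w_t(y)>0$, the process stops and $\mathcal{RC}(G,w_0):=t$. Otherwise, at time $t+1$ the crawler moves to the neighbour $u$ of $v$ minimising $w_t(u)$. A vertex is ''cleaned'' at the first time it is visited. A complete $k$-partite graph with parts $V_1,\dots,V_k$ has an edge between $u$ and $v$ iff they lie in different parts. The surplus $S_{w_0}(i)$ of part $V_i$ is the number of not-yet-cleaned vertices of $V_i$ at the first moment when all vertices of $V\setminus V_i$ have been cleaned (and $0$ if $V_i$ is fully cleaned by then). *)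

(* Defs.v *)
From HB Require Import structures.
From mathcomp Require Import all_boot all_order all_algebra.
Set Implicit Arguments. Unset Strict Implicit. Unset Printing Implicit Defensive.
Import Order.TTheory GRing.Theory Num.Theory.

(* Vertices: a finite type T; part : T -> 'I_k assigns each vertex to its part
   V_i = [set v | part v == i]. *)

Definition cmp_adj (T : finType) (k : nat) (part : T -> 'I_k) : rel T :=
  fun u v => part u != part v.

(* Initial weighting: a bijection w0 : T -> {-n, ..., -1}, n = #|T|
   (injective + range inside a set of size n = bijective). *)
Definition initial_weighting (T : finType) (w0 : T -> int) : Prop :=
  injective w0 /\ (forall v, (- Posz #|T| <= w0 v)%R /\ (w0 v <= -1)%R).

(* A run of the crawler is a sequence x : nat -> T, where x t is the vertex
   visited at time t >= 1 (x 0 is an irrelevant junk value). *)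

Definition cleaned_by (T : finType) (x : nat -> T) (t : nat) (u : T) : bool :=
  [exists s : 'I_t.+1, (0 < (s : nat))%N && (x s == u)].

(* last visit time of u up to time t (0 if never visited) *)
Definition last_visit (T : finType) (x : nat -> T) (t : nat) (u : T) : nat :=
  (\max_(s < t.+1 | (0 < (s : nat))%N && (x s == u)) (s : nat))%N.

Definition weight_at (T : finType) (w0 : T -> int) (x : nat -> T)
    (t : nat) (u : T) : int :=
  if (0 < last_visit x t u)%N then Posz (last_visit x t u) else w0 u.

Definition is_crawl (T : finType) (adj : rel T) (w0 : T -> int)
    (x : nat -> T) : Prop :=
  w0 (x 1%N) = (- Posz #|T|)%R /\
  forall t : nat, (1 <= t)%N ->
    adj (x t) (x t.+1) /\
    forall u, adj (x t) u -> (weight_at w0 x t (x t.+1) <= weight_at w0 x t u)%R.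

(* all vertices cleaned by time t, i.e. min_y w_t(y) > 0 *)
Definition all_cleaned (T : finType) (x : nat -> T) (t : nat) : bool :=
  [forall u, cleaned_by x t u].

Definition is_RC (T : finType) (x : nat -> T) (t : nat) : Prop :=
  all_cleaned x t /\ forall s, (s < t)%N -> ~~ all_cleaned x s.

Definition outside_cleaned (T : finType) (k : nat) (part : T -> 'I_k)
    (x : nat -> T) (i : 'I_k) (t : nat) : bool :=
  [forall u, (part u != i) ==> cleaned_by x t u].

Definition is_surplus (T : finType) (k : nat) (part : T -> 'I_k)
    (x : nat -> T) (i : 'I_k) (s : nat) : Prop :=
  exists tau : nat,
    outside_cleaned part x i tau /\
    (forall t, (t < tau)%N -> ~~ outside_cleaned part x i t) /\
    s = #|[set u | (part u == i) && ~~ cleaned_by x tau u]|.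

(* Main.v *)
Require Import Defs.
From HB Require Import structures.
From mathcomp Require Import all_boot all_order all_algebra.
From mathcomp Require Import zify.
Import Order.TTheory GRing.Theory Num.Theory.
Set Implicit Arguments. Unset Strict Implicit.

Lemma cleaned0 (T : finType) (x : nat -> T) u : cleaned_by x 0 u = false.
Proof. by apply/existsP => -[[[|s] //] ]. Qed.

Lemma cleanedS (T : finType) (x : nat -> T) t u :
  cleaned_by x t.+1 u = cleaned_by x t u || (x t.+1 == u).
Proof.
apply/existsP/orP.
- case=> s /andP[s0 xs]. have := ltn_ord s; rewrite ltnS leq_eqVlt.
  case/orP => [/eqP st| st].
    by right; rewrite -st.
  by left; apply/existsP; exists (Ordinal st); rewrite s0.
- case=> [/existsP[s /andP[s0 xs]]|xt].
    by exists (widen_ord (leqnSn _) s); rewrite s0.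
  by exists ord_max.
Qed.

Lemma cleaned_mono (T : finType) (x : nat -> T) s t u :
  s <= t -> cleaned_by x s u -> cleaned_by x t u.
Proof.
move=> st /existsP[r /andP[r0 xr]]; apply/existsP.
have rt : r < t.+1 by apply: leq_trans (ltn_ord r) _.
by exists (Ordinal rt); rewrite r0.
Qed.

Lemma cleaned_self (T : finType) (x : nat -> T) t :
  0 < t -> cleaned_by x t (x t).
Proof. by move=> t0; apply/existsP; exists ord_max; rewrite /= t0 eqxx. Qed.

Lemma w_pos (T : finType) (w0 : T -> int) (x : nat -> T) t u :
  cleaned_by x t u -> (0 < weight_at w0 x t u)%R.
Proof.
case/existsP=> s /andP[s0 xs]; rewrite /weight_at.
have : s <= last_visit x t u.
  by rewrite /last_visit; apply: (@leq_bigmax_cond _ (fun r : 'I_t.+1 => (0 < (r : nat)) && (x r == u)) (fun r : 'I_t.+1 => (r : nat)) s); rewrite s0.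
move=> h; have -> : 0 < last_visit x t u by apply: leq_trans h.
by rewrite ltz_nat; apply: leq_trans h.
Qed.

Lemma w_neg (T : finType) (w0 : T -> int) (x : nat -> T) t u :
  initial_weighting w0 -> ~~ cleaned_by x t u -> (weight_at w0 x t u <= -1)%R.
Proof.
move=> [_ hw] nc; rewrite /weight_at.
have -> : last_visit x t u = 0.
  rewrite /last_visit big_pred0 // => s; apply/negP => /andP[s0 xs].
  by move/negP: nc; apply; apply/existsP; exists s; rewrite s0.
by case: (hw u).
Qed.

Definition Uc (T : finType) (x : nat -> T) t : {set T} :=
  [set u | ~~ cleaned_by x t u].

Lemma UcS (T : finType) (x : nat -> T) t : Uc x t.+1 = Uc x t :\ x t.+1.
Proof.
apply/setP => u; rewrite !inE cleanedS negb_or andbC eq_sym.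
by [].
Qed.

Lemma card_UcS (T : finType) (x : nat -> T) t :
  #|Uc x t| = (x t.+1 \in Uc x t) + #|Uc x t.+1|.
Proof. by rewrite UcS -cardsD1. Qed.

Lemma Uc0 (T : finType) (x : nat -> T) : Uc x 0 = setT.
Proof. by apply/setP => u; rewrite !inE cleaned0. Qed.

Lemma Uc_mono (T : finType) (x : nat -> T) s t : s <= t -> Uc x t \subset Uc x s.
Proof.
move=> st; apply/subsetP => u; rewrite !inE; apply: contra.
exact: cleaned_mono.
Qed.

Lemma step_new (T : finType) (adj : rel T) (w0 : T -> int) (x : nat -> T) t u :
  is_crawl adj w0 x -> initial_weighting w0 -> 0 < t ->
  adj (x t) u -> ~~ cleaned_by x t u -> ~~ cleaned_by x t (x t.+1).
Proof.
move=> [_ hc] hw t0 au nu; apply/negP => c.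
have [_ hm] := hc t t0.
have := hm u au; have := w_pos w0 c; have := w_neg hw nu.
move=> h1 h2 h3.
have : (weight_at w0 x t (x t.+1) <= -1)%R by apply: le_trans h3 h1.
by rewrite leNgt (lt_trans _ h2).
Qed.

Lemma analysis (T : finType) (k : nat) (part : T -> 'I_k) (w0 : T -> int)
    (hk : (3 <= k)%N)
    (hparts : forall i : 'I_k, exists v : T, part v = i)
    (hw0 : initial_weighting w0) (x : nat -> T) :
  is_crawl (cmp_adj part) w0 x ->
    exists S : 'I_k -> nat,
      (forall i, is_surplus part x i (S i)) /\
      (exists j : 'I_k, (0 < S j)%N /\ forall i, i != j -> S i = 0%N) /\
      (\sum_(i < k) S i = \max_(i < k) S i)%N /\
      is_RC x (#|T| + \sum_(i < k) S i - 1)%N.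
Proof.
move=> hc; set n := #|T|.
pose stuck s := [forall u, (u \in Uc x s) ==> (part u == part (x s))].
have adjS : forall t, 0 < t -> part (x t.+1) != part (x t).
  by move=> t t0; have [_ /(_ t t0) [h _]] := hc; rewrite eq_sym.
have count : forall t, (forall s, 0 < s < t -> ~~ stuck s) -> #|Uc x t| = n - t.
  elim=> [|t IH] hs; first by rewrite Uc0 cardsT subn0.
  have := card_UcS x t; rewrite IH; last by move=> s /andP[s0 st]; apply: hs; rewrite s0 ltnW.
  have -> : x t.+1 \in Uc x t.
    case: t {IH} hs => [|t] hs; first by rewrite Uc0 inE.
    have /forallPn[u] := hs t.+1 (leqnn _).
    rewrite negb_imply => /andP[uU pu]; rewrite inE.
    apply: (step_new hc hw0 _ (u := u)) => //; last by rewrite inE in uU.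
    by rewrite /cmp_adj eq_sym.
  move=> h; rewrite subnS; lia.
have [i0 [i1 i01]] : exists i0 i1 : 'I_k, i0 != i1.
  by exists (Ordinal (leq_trans (isT : 0 < 3) hk)), (Ordinal (leq_trans (isT : 1 < 3) hk)).
have other : forall v : T, exists u, part u != part v.
  move=> v; case: (eqVneq (part v) i0) => e.
    by have [u pu] := hparts i1; exists u; rewrite pu e eq_sym.
  by have [u pu] := hparts i0; exists u; rewrite pu eq_sym.
have npos : 0 < n by rewrite /n; have [u _] := other (x 0); apply/card_gt0P; exists u.
have nst1 : ~~ stuck 1.
  have [u pu] := other (x 1); apply/forallPn; exists u; rewrite negb_imply pu andbT.
  by rewrite UcS Uc0 !inE andbT; apply: contraNneq pu => ->.
have ex' : exists t, [&& 0 < t, t <= n & stuck t].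
  case: (boolP [exists s : 'I_n, (0 < (s : nat)) && stuck s]).
    by case/existsP=> s /andP[s0 ss]; exists s; rewrite s0 ss ltnW.
  move=> hn; exists n; rewrite npos leqnn /=.
  have e : #|Uc x n| = 0.
    rewrite count ?subnn // => s /andP[s0 sn]; apply/negP => ss.
    by move/existsP: hn; apply; exists (Ordinal sn); rewrite /= s0 ss.
  apply/forallP => u; apply/implyP => uU.
  by have := cards0_eq e => E; rewrite E inE in uU.
have [w /and3P[wpos wn sw]] := ex'.
have ex : exists t, (0 < t) && stuck t by exists w; rewrite wpos sw.
have [t0 /andP[t0pos st0] tmin] := ex_minnP ex.
have t0n : t0 <= n by apply: leq_trans (tmin w _) wn; rewrite wpos sw.
have cnt : forall t, t <= t0 -> #|Uc x t| = n - t.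
  move=> t tt0; apply: count => s /andP[s0 st]; apply/negP => ss.
  have := tmin s; rewrite s0 ss => /(_ isT); lia.
have new : forall s, 0 < s <= t0 -> x s \in Uc x s.-1.
  move=> s /andP[s0 st]; have := card_UcS x s.-1; rewrite prednK //.
  rewrite !cnt // ?(leq_trans (leq_pred s)) //.
  by case: (x s \in Uc x s.-1) => //=; lia.
have t0gt1 : 1 < t0.
  by case: t0 t0pos st0 {tmin t0n cnt new} => [|[|t]] //; rewrite (negbTE nst1).
set j := part (x t0).
have UcJ : forall u, u \in Uc x t0 -> part u = j.
  by move=> u uU; move/forallP: st0 => /(_ u); rewrite uU => /eqP.
set S0 := #|Uc x t0|.
have S0e : S0 = n - t0 by rewrite /S0 cnt.
have bounce : forall m, m <= S0 -> [/\ #|Uc x (t0 + 2 * m)| = S0 - m,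
    part (x (t0 + 2 * m)) = j & (0 < m -> x (t0 + 2 * m) \in Uc x (t0 + 2 * m).-1)].
  elim=> [|m IH] mS; first by rewrite muln0 addn0 subn0.
  have [c1 p1 _] := IH (ltnW mS).
  have tpos : 0 < t0 + 2 * m by lia.
  have a1 := adjS _ tpos; rewrite p1 in a1.
  have n1 : x (t0 + 2 * m).+1 \notin Uc x (t0 + 2 * m).
    apply/negP => h; have := UcJ _ (subsetP (Uc_mono x (leq_addr _ _)) _ h).
    by move/eqP; rewrite (negbTE a1).
  have c2 : #|Uc x (t0 + 2 * m).+1| = S0 - m.
    by have := card_UcS x (t0 + 2 * m); rewrite (negbTE n1) c1.
  have [u uU] : exists u, u \in Uc x (t0 + 2 * m).+1.
    by apply/set0Pn; rewrite -card_gt0 c2; lia.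
  have pu : part u = j.
    by apply: UcJ; apply: (subsetP (Uc_mono x _)) uU; lia.
  have nw : x (t0 + 2 * m).+2 \in Uc x (t0 + 2 * m).+1.
    rewrite inE; apply: (step_new hc hw0 _ (u := u)) => //; last by rewrite inE in uU.
    by rewrite /cmp_adj pu.
  have e : t0 + 2 * m.+1 = (t0 + 2 * m).+2 by lia.
  rewrite e; split => //.
  - by have := card_UcS x (t0 + 2 * m).+1; rewrite nw c2 => /= h; lia.
  - by apply: UcJ; apply: (subsetP (Uc_mono x _)) nw; lia.
set L := t0 + 2 * S0.
have [cL pL nL] := bounce S0 (leqnn _).
have xLnew : x L \in Uc x L.-1.
  case: (posnP S0) => [z|pS]; last exact: nL.
  by rewrite /L z muln0 addn0; apply: new; rewrite t0pos leqnn.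
have UL : forall u, cleaned_by x L u.
  move=> u; have := cards0_eq (etrans cL (subnn _)) => E.
  have : u \notin Uc x L by rewrite E inE.
  by rewrite inE negbK.
have notL : forall t, t < L -> ~~ cleaned_by x t (x L).
  move=> t tL; have := subsetP (Uc_mono x (_ : t <= L.-1)) _ xLnew.
  by rewrite inE; apply; lia.
have Ln : L = n + S0 by rewrite /L S0e; lia.
pose S := fun i : 'I_k => if i == j then S0.+1 else 0.
have sumS : \sum_(i < k) S i = S0.+1.
  rewrite (bigD1 j) //= big1 ?addn0 /S ?eqxx // => i /negbTE ->.
  by [].
have maxS : \max_(i < k) S i = S0.+1.
  rewrite (bigD1 j) //= big1 ?maxn0 /S ?eqxx // => i /negbTE ->.
  by [].
exists S; split; last split; last split.
- move=> i; rewrite /S; case: eqP => [->|/eqP ne].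
  + exists t0.-1.
    have oc : outside_cleaned part x j t0.-1.
      apply/forallP => u; apply/implyP => pu.
      have : cleaned_by x t0 u.
        have : u \notin Uc x t0 by apply/negP => /UcJ /eqP; rewrite (negbTE pu).
        by rewrite inE negbK.
      rewrite -{1}(prednK t0pos) cleanedS => /orP[//|/eqP e].
      by move: pu; rewrite -e prednK // eqxx.
    split => //; split.
    * move=> t tt; apply/forallPn; exists (x t0.-1); rewrite negb_imply.
      apply/andP; split.
        have := adjS t0.-1 (_ : 0 < t0.-1); rewrite prednK // eq_sym; apply; lia.
      have := subsetP (Uc_mono x (_ : t <= t0.-1.-1)) _ (new t0.-1 _).
      by rewrite inE; apply; lia.
    * have e : [set u | (part u == j) && ~~ cleaned_by x t0.-1 u] = Uc x t0.-1.
        apply/setP => u; rewrite !inE; apply/andP/idP => [[] //|nc]; split => //.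
        apply/negPn/negP => pu; move/forallP: oc => /(_ u); rewrite pu /=.
        by move/negP: nc.
      rewrite e cnt ?leq_pred //; lia.
  + exists L; split; last split.
    * by apply/forallP => u; apply/implyP => _; apply: UL.
    * move=> t tL; apply/forallPn; exists (x L); rewrite negb_imply notL // andbT.
      by rewrite pL eq_sym.
    * apply/esym/eqP; rewrite cards_eq0; apply/eqP/setP => u; rewrite !inE UL.
      by rewrite andbF.
- exists j; rewrite /S eqxx; split => // i /negbTE ->; by [].
- by rewrite sumS maxS.
- rewrite sumS; have -> : n + S0.+1 - 1 = L by lia.
  split; first by apply/forallP.
  move=> s sL; apply/forallPn; exists (x L); exact: notL.
Qed.
Lemma exists_min (T : finType) (w0 : T -> int) :
  0 < #|T| -> initial_weighting w0 -> exists v, w0 v = (- Posz #|T|)%R.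
Proof.
move=> npos [inj hw].
pose f (v : T) : 'I_(#|T|.-1).+1 := inord (`|w0 v|%N.-1).
have hb : forall v, (1 <= `|w0 v|%N <= #|T|)%N.
  move=> v; have [h1 h2] := hw v; lia.
have rep : forall v, w0 v = (- Posz `|w0 v|%N)%R.
  move=> v; rewrite ltz0_abs ?opprK //; have [_ h] := hw v.
  by apply: le_lt_trans h _.
have finj : injective f.
  move=> a b /(congr1 val); rewrite /f /= !inordK; last 2 first.
  - have := hb b; move: npos; set m := `|w0 b|%N; set N := #|T|; lia.
  - have := hb a; move: npos; set m := `|w0 a|%N; set N := #|T|; lia.
  move=> e; apply: inj; rewrite (rep a) (rep b); congr (- Posz _)%R.
  have := hb a; have := hb b; move: e npos.
  set m1 := `|w0 a|%N; set m2 := `|w0 b|%N; set N := #|T|; lia.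
have := inj_card_onto finj (_ : #|T| >= #|'I_(#|T|.-1).+1|) ord_max.
case/(_ _)/codomP => [|v fv]; first by rewrite card_ord prednK.
exists v; move: fv => /(congr1 val); rewrite /f /= inordK; last first.
  have := hb v; move: npos; set m := `|w0 v|%N; set N := #|T|; lia.
rewrite (rep v) => e; congr (- Posz _)%R.
have := hb v; move: e npos; set m := `|w0 v|%N; set N := #|T|; lia.
Qed.

Lemma weight_ext (T : finType) (w0 : T -> int) (y z : nat -> T) t u :
  (forall s, s <= t -> y s = z s) -> weight_at w0 y t u = weight_at w0 z t u.
Proof.
move=> e; rewrite /weight_at /last_visit.
have -> : \max_(s < t.+1 | (0 < (s : nat)) && (y s == u)) (s : nat) =
          \max_(s < t.+1 | (0 < (s : nat)) && (z s == u)) (s : nat).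
  by apply: eq_bigl => s; rewrite e // -ltnS.
by [].
Qed.

Section Constr.
Variables (T : finType) (k : nat) (part : T -> 'I_k) (w0 : T -> int)
  (nb : T -> T) (v1 : T).

Definition step (y : nat -> T) t : T :=
  Order.arg_min (nb (y t)) (fun u => cmp_adj part (y t) u) (fun u => weight_at w0 y t u).

Fixpoint XX t : nat -> T := match t with
  | 0 => fun _ => v1
  | t'.+1 => fun s => if s <= t'.+1 then XX t' s else step (XX t') t'.+1
  end.

Definition xx s := XX s s.

Lemma XX_stable d s : XX (s + d) s = XX s s.
Proof.
elim: d => [|d IH]; rewrite ?addn0 // addnS /=.
by rewrite (_ : s <= (s + d).+1) // (leq_trans (leq_addr d s)) // addnC.
Qed.

Lemma XX_agree t s : s <= t.+1 -> XX t s = xx s.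
Proof.
rewrite leq_eqVlt => /orP[/eqP ->|st]; first by rewrite /xx /= leqnn.
rewrite ltnS in st.
by rewrite /xx -(subnKC st) XX_stable.
Qed.

Lemma xx1 : xx 1 = v1. Proof. by []. Qed.

Lemma xxS t : xx t.+2 = step (XX t) t.+1.
Proof. by rewrite /xx /= leqnn ltnn. Qed.
End Constr.

Lemma crawl_exists (T : finType) (k : nat) (part : T -> 'I_k) (w0 : T -> int)
    (hk : (3 <= k)%N)
    (hparts : forall i : 'I_k, exists v : T, part v = i)
    (hw0 : initial_weighting w0) :
  exists x : nat -> T, is_crawl (cmp_adj part) w0 x.
Proof.
have [i0 [i1 i01]] : exists i0 i1 : 'I_k, i0 != i1.
  by exists (Ordinal (leq_trans (isT : 0 < 3) hk)), (Ordinal (leq_trans (isT : 1 < 3) hk)).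
have other : forall v : T, exists u, part u != part v.
  move=> v; case: (eqVneq (part v) i0) => e.
    by have [u pu] := hparts i1; exists u; rewrite pu e eq_sym.
  by have [u pu] := hparts i0; exists u; rewrite pu eq_sym.
pose nb v := xchoose (other v).
have hnb : forall v, cmp_adj part v (nb v).
  by move=> v; rewrite /cmp_adj eq_sym; apply: (xchooseP (other v)).
have npos : 0 < #|T| by have [u _] := hparts i0; apply/card_gt0P; exists u.
have [v1 hv1] := exists_min npos hw0.
exists (xx part w0 nb v1); split; first by [].
case=> [//|t] _; rewrite xxS.
have ag : forall s, s <= t.+1 -> XX part w0 nb v1 t s = xx part w0 nb v1 s.
  by move=> s; apply: XX_agree.
rewrite /step ag //.
case: (arg_minP (fun u => weight_at w0 (XX part w0 nb v1 t) t.+1 u) (hnb (xx part w0 nb v1 t.+1))).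
move=> i Pi Pmin; split => // u au.
rewrite -!(weight_ext w0 _ ag); exact: Pmin.
Qed.

Theorem mainTheorem4 (T : finType) (k : nat) (part : T -> 'I_k)
    (w0 : T -> int)
    (hk : (3 <= k)%N)
    (hparts : forall i : 'I_k, exists v : T, part v = i)
    (hw0 : initial_weighting w0) :
  (exists x : nat -> T, is_crawl (cmp_adj part) w0 x) /\
  forall x : nat -> T, is_crawl (cmp_adj part) w0 x ->
    exists S : 'I_k -> nat,
      (forall i, is_surplus part x i (S i)) /\
      (exists j : 'I_k, (0 < S j)%N /\ forall i, i != j -> S i = 0%N) /\
      (\sum_(i < k) S i = \max_(i < k) S i)%N /\
      is_RC x (#|T| + \sum_(i < k) S i - 1)%N.
Proof.
split; first exact: crawl_exists.
by move=> x; apply: analysis.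
Qed.
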